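(* Let $n\ge 3$ and let $DW_n$ be the double wheel graph. Then $$\chi^+(DW_n)=\begin{cases}5n+1 & \text{if } n \text{ is even},\\ 7n-2 & \text{if } n \text{ is odd}.\end{cases}$$
   Context: The double wheel graph $DW_n=2C_n+K_1$ is obtained from the disjoint union of two cycles $C_n$ by adding one new vertex adjacent to every vertex of both cycles. For a proper colouring $c:V(G)\to\{1,\dots,k\}$ of a graph $G$ (colour $c_i$ identified with the integer $i$), its colouring sum is $\sum_{i=1}^k i\,\theta(c_i)=\sum_{v\in V(G)} c(v)$, where $\theta(c_i)$ is the number of vertices receiving colour $c_i$. The $\chi^+$-chromatic sum $\chi^+(G)$ is the maximum of the colouring sum over all proper colourings of $G$ using exactly $\chi(G)$ colours (the chromatic number), i.e. over all proper colourings $c:V(G)\to\{1,\dots,\chi(G)\}$. *)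

(* Defs.v *)
From mathcomp Require Import all_boot all_order.
Set Implicit Arguments. Unset Strict Implicit. Unset Printing Implicit Defensive.

(* A colouring with k colours: c : T -> 'I_k; the ordinal i stands for colour c_(i+1). *)
Definition properb (T : finType) (e : rel T) (k : nat) (c : {ffun T -> 'I_k}) : bool :=
  [forall x, forall y, e x y ==> (c x != c y)].

Definition colourable (T : finType) (e : rel T) (k : nat) : bool :=
  [exists c : {ffun T -> 'I_k}, properb e c].

(* Chromatic number: the least k such that e has a proper k-colouring
   (searched in 0..#|T|, which suffices for loopless graphs). *)
Definition chromatic_number (T : finType) (e : rel T) : nat :=
  find (colourable e) (iota 0 #|T|.+1).

Definition chi_plus (T : finType) (e : rel T) : nat :=
  \max_(c : {ffun T -> 'I_(chromatic_number e)} | properb e c)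
     \sum_(v : T) (nat_of_ord (c v)).+1.

(* Double wheel DW_n = 2C_n + K_1: vertices None (the hub) and Some (b, i),
   b : bool choosing the copy of the cycle, i : 'I_n its position. *)
Definition dw_vertex (n : nat) := option (bool * 'I_n).

Definition dw_adj (n : nat) : rel (dw_vertex n) :=
  fun x y =>
    match x, y with
    | None, None => false
    | None, Some _ => true
    | Some _, None => true
    | Some (b, i), Some (b', j) =>
        (b == b') && ((nat_of_ord j == (i.+1 %% n)) || (nat_of_ord i == (j.+1 %% n)))
    end.

(* Main.v *)
Require Import Defs.
From mathcomp Require Import all_boot zify.
Lemma sum_option (T:finType) (F : option T -> nat) : \sum_x F x = F None + \sum_t F (Some t).
Proof.
rewrite (bigD1 None) //=; congr (_ + _).
rewrite (reindex_omap Some (fun x => x)) //=.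
  by apply: eq_bigl => t; rewrite eqxx.
by move=> [?|].
Qed.
Lemma sum_shift n (F : 'I_n -> nat) : \sum_(i < n) F (ordS i) = \sum_(i < n) F i.
Proof. by rewrite [RHS](reindex_inj (@ordS_inj n)). Qed.
Lemma sum_dw n (F : option (bool * 'I_n) -> nat) :
  \sum_x F x = F None + (\sum_i F (Some (true, i)) + \sum_i F (Some (false, i))).
Proof. rewrite sum_option; congr (_ + _). rewrite (eq_bigr (fun p => F (Some (p.1,p.2)))); last by case. by rewrite -(pair_bigA _ (fun b i => F (Some (b, i)))) big_bool. Qed.
Lemma swap2 (a b y z : nat) : a != b -> (a = y \/ a = z) -> (b = y \/ b = z) -> (b == y) = ~~ (a == y).
Proof.
move=> hab [ea|ea] [eb|eb]; rewrite ea eb ?eqxx /= in hab *; rewrite //.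
  by rewrite eq_sym (negbTE hab).
Qed.

Lemma odd_cycle n (f : 'I_n -> nat) y z : odd n ->
  (forall i, f i != f (ordS i)) -> (forall i, f i = y \/ f i = z) -> False.
Proof.
case: n f => [|m] f //= om hadj hv.
have step : forall j, j < m.+1 -> (f (inord j) == y) = (f ord0 == y) (+) odd j.
  elim=> [|j IH] hj.
    by rewrite addbF; congr (f _ == y); apply: val_inj; rewrite /= inordK.
  have hS : ordS (inord j : 'I_m.+1) = inord j.+1.
    apply: val_inj; rewrite /= !inordK ?modn_small //; lia.
  have := hadj (inord j); rewrite hS => hne.
  rewrite (@swap2 _ _ y z hne (hv _) (hv _)) IH ?(ltnW hj) //=.
  by rewrite addbN.
have hS : ordS (inord m : 'I_m.+1) = ord0.
  by apply: val_inj; rewrite /= !inordK ?modnn.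
have hne := hadj (inord m); rewrite hS in hne.
have := step m (ltnSn m); rewrite (negbTE om) addbF => e1.
have := @swap2 _ _ y z hne (hv _) (hv _); rewrite e1.
by case: (f ord0 == y).
Qed.
Lemma cyc_bound n (f : 'I_n -> nat) x y z : x < y -> y < z ->
  (forall i, f i = x \/ f i = y \/ f i = z) -> (forall i, f i != f (ordS i)) ->
  2 * (\sum_(i < n) f i) + 2 * (y - x) * (\sum_(i < n) (f i == x)) <= n * (y + z).
Proof.
move=> xy yz hv hadj.
have pw : forall i, f i + f (ordS i) + (y-x) * ((f i == x) + (f (ordS i) == x)) <= y + z.
  move=> i; have := hadj i.
  case: (hv i) => [->|[->|->]]; case: (hv (ordS i)) => [->|[->|->]]; move=> h; lia.
have : \sum_i (f i + f (ordS i) + (y-x) * ((f i == x) + (f (ordS i) == x))) <= \sum_(i < n) (y + z).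
  by apply: leq_sum => i _; exact: pw.
rewrite big_split /= -big_distrr /= !big_split /= !sum_shift sum_nat_const card_ord.
rewrite (@sum_shift n (fun i => nat_of_bool (f i == x))) sum_nat_const card_ord.
move: (\sum_(i<n) f i) (\sum_(i < n) nat_of_bool (f i == x)) => S C; move: (y - x) => d; nia.
Qed.

Lemma find_iota_K (P : pred nat) K m : K < m -> P K -> (forall j, j < K -> ~~ P j) ->
  find P (iota 0 m) = K.
Proof.
move=> hK pK hlt.
rewrite -(subnKC (ltnW hK)) iotaD find_cat.
have -> : has P (iota 0 K) = false.
  apply/negbTE/hasPn => j; rewrite mem_iota => /andP[_ hj]; exact: hlt.
rewrite size_iota add0n.
case e: (m - K) => [|r]; first lia.
by rewrite /= pK addn0.
Qed.

Lemma prop_adj (T : finType) (e : rel T) k (c : {ffun T -> 'I_k}) x y :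
  properb e c -> e x y -> (c x : nat) != c y.
Proof. move=> /forallP /(_ x) /forallP /(_ y) /implyP H /H; exact. Qed.
Arguments prop_adj {T e k c x y}.

Lemma adj_cyc {n} b (i : 'I_n) : @dw_adj n (Some (b, i)) (Some (b, ordS i)).
Proof. by rewrite /= !eqxx. Qed.

Lemma adj_hub {n} b (i : 'I_n) : @dw_adj n None (Some (b, i)).
Proof. by []. Qed.

Lemma card_dw n : #|{: dw_vertex n}| = (n + n).+1.
Proof. by rewrite /dw_vertex card_option card_prod card_bool card_ord; lia. Qed.

Lemma cn_eq n K : K <= 4 -> 3 <= n ->
  (exists c : {ffun dw_vertex n -> 'I_K}, properb (@dw_adj n) c) ->
  (forall k (c : {ffun dw_vertex n -> 'I_k}), properb (@dw_adj n) c -> K <= k) ->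
  chromatic_number (@dw_adj n) = K.
Proof.
move=> hK4 hn [c0 hc0] hlow.
apply: find_iota_K.
- rewrite card_dw; lia.
- by apply/existsP; exists c0.
- move=> j hj; apply/existsPn => c; apply/negP => /hlow; lia.
Qed.

Lemma low3 n k (c : {ffun dw_vertex n -> 'I_k}) : 3 <= n -> properb (@dw_adj n) c -> 3 <= k.
Proof.
move=> hn hc.
have h0 : 0 < n by lia.
pose i0 := Ordinal h0.
have a1 := prop_adj hc (adj_hub false i0).
have a2 := prop_adj hc (adj_hub false (ordS i0)).
have a3 := prop_adj hc (adj_cyc false i0).
move: (c None) (c (Some (false, i0))) (c (Some (false, ordS i0))) a1 a2 a3 => u v w a1 a2 a3.
have := ltn_ord u; have := ltn_ord v; have := ltn_ord w.
lia.
Qed.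

Lemma low4 n k (c : {ffun dw_vertex n -> 'I_k}) : odd n -> properb (@dw_adj n) c -> 4 <= k.
Proof.
move=> on hc; rewrite leqNgt; apply/negP => hk.
pose f := fun i : 'I_n => nat_of_ord (c (Some (false,i))).
have hadj : forall i, f i != f (ordS i) := fun i => prop_adj hc (adj_cyc false i).
have hh : forall i, (c None : nat) != f i := fun i => prop_adj hc (adj_hub false i).
have hlt : forall i, f i < 3.
  by move=> i; apply: leq_trans (ltn_ord _) _; rewrite -ltnS.
have hN := ltn_ord (c None).
move: (nat_of_ord (c None)) hh hN => h hh hN.
have [y [z hv]] : exists y z, forall i, f i = y \/ f i = z.
  have : h = 0 \/ h = 1 \/ h = 2 by lia.
  case=> [e|[e|e]]; [exists 1, 2 | exists 0, 2 | exists 0, 1];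
    move=> i; have := hh i; have := hlt i; lia.
exact: (@odd_cycle _ f y z on hadj hv).
Qed.

Lemma cyc_bound_odd n (f : 'I_n -> nat) x y z : odd n -> x < y -> y < z ->
  (forall i, f i = x \/ f i = y \/ f i = z) -> (forall i, f i != f (ordS i)) ->
  2 * (\sum_(i < n) f i) + 2 * (y - x) <= n * (y + z).
Proof.
move=> on xy yz hv hadj.
have := @cyc_bound n f x y z xy yz hv hadj.
case: (boolP [exists i, f i == x]) => [/existsP [i /eqP hi]|/existsPn hn].
  rewrite (bigD1 i) //= [\sum_(j < n) nat_of_bool _](bigD1 i) //= hi eqxx /=.
  by move=> H; apply: leq_trans H; rewrite leq_add2l mulnDr muln1 leq_addr.
exfalso; apply: (@odd_cycle n f y z on hadj) => i.
by case: (hv i) => // hx; move: (hn i); rewrite hx eqxx.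
Qed.

Lemma witness n k (col : dw_vertex n -> nat) : (forall v, col v < k.+1) ->
  (forall b i, col None != col (Some (b,i))) ->
  (forall b (i j : 'I_n), (j : nat) = i.+1 %% n -> col (Some (b,i)) != col (Some (b,j))) ->
  properb (@dw_adj n) [ffun v => (inord (col v) : 'I_k.+1)].
Proof.
move=> hlt hh hc; apply/forallP => x; apply/forallP => y; apply/implyP.
rewrite !ffunE -val_eqE /= !inordK //.
case: x => [[b i]|]; case: y => [[b' j]|] //=.
- move=> /andP [/eqP <- /orP [/eqP hj | /eqP hi]]; first exact: hc.
  by rewrite eq_sym; apply: hc.
all: by move=> _; rewrite ?(eq_sym (col (Some _))); apply: hh.
Qed.

Lemma sum_alt m a b : \sum_(0 <= i < m.*2) (if odd i then a else b) = m * (a + b).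
Proof.
elim: m => [|m IH]; first by rewrite big_geq.
rewrite doubleS !big_nat_recr //= IH odd_double /=; lia.
Qed.

Lemma sum_dw' n (F : option (bool * 'I_n) -> nat) :
  \sum_x F x = F None + (\sum_(i < n) F (Some (true, i)) + \sum_(i < n) F (Some (false, i))).
Proof. exact: sum_dw. Qed.

Lemma cyc_even n (c : {ffun dw_vertex n -> 'I_3}) b : properb (@dw_adj n) c ->
  [/\ (c None : nat) = 0 -> 2 * (\sum_(i < n) (nat_of_ord (c (Some (b, i)))).+1) <= 5 * n,
      (c None : nat) = 1 -> 2 * (\sum_(i < n) (nat_of_ord (c (Some (b, i)))).+1) <= 4 * n &
      (c None : nat) = 2 -> 2 * (\sum_(i < n) (nat_of_ord (c (Some (b, i)))).+1) <= 3 * n].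
Proof.
move=> hc.
pose f := fun i : 'I_n => (nat_of_ord (c (Some (b, i)))).+1.
have hadj : forall i, f i != f (ordS i).
  by move=> i; rewrite /f eqSS; exact: prop_adj hc (adj_cyc b i).
have hh : forall i, (nat_of_ord (c None)).+1 != f i.
  by move=> i; rewrite /f eqSS; exact: prop_adj hc (adj_hub b i).
have hlt : forall i, 0 < f i <= 3 by move=> i; rewrite /f ltn_ord.
have -> : \sum_(i < n) (nat_of_ord (c (Some (b, i)))).+1 = \sum_(i < n) f i by [].
move: (nat_of_ord (c None)) hh => h hh.
split=> eh.
- have hv : forall i, f i = 1 \/ f i = 2 \/ f i = 3.
    by move=> i; have := hh i; have := hlt i; lia.
  have := @cyc_bound n f 1 2 3 isT isT hv hadj.
  move: (\sum_(i < n) nat_of_bool _) => C; lia.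
- have hv : forall i, f i = 0 \/ f i = 1 \/ f i = 3.
    by move=> i; have := hh i; have := hlt i; lia.
  have := @cyc_bound n f 0 1 3 isT isT hv hadj.
  move: (\sum_(i < n) nat_of_bool _) => C; lia.
- have hv : forall i, f i = 0 \/ f i = 1 \/ f i = 2.
    by move=> i; have := hh i; have := hlt i; lia.
  have := @cyc_bound n f 0 1 2 isT isT hv hadj.
  move: (\sum_(i < n) nat_of_bool _) => C; lia.
Qed.

Lemma cyc_odd n (c : {ffun dw_vertex n -> 'I_4}) b : odd n -> properb (@dw_adj n) c ->
  [/\ (c None : nat) = 0 -> 2 * (\sum_(i < n) (nat_of_ord (c (Some (b, i)))).+1) + 2 <= 7 * n,
      (c None : nat) = 1 -> 2 * (\sum_(i < n) (nat_of_ord (c (Some (b, i)))).+1) + 4 <= 7 * n,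
      (c None : nat) = 2 -> 2 * (\sum_(i < n) (nat_of_ord (c (Some (b, i)))).+1) + 2 <= 6 * n &
      (c None : nat) = 3 -> 2 * (\sum_(i < n) (nat_of_ord (c (Some (b, i)))).+1) <= 5 * n].
Proof.
move=> on hc.
pose f := fun i : 'I_n => (nat_of_ord (c (Some (b, i)))).+1.
have hadj : forall i, f i != f (ordS i).
  by move=> i; rewrite /f eqSS; exact: prop_adj hc (adj_cyc b i).
have hh : forall i, (nat_of_ord (c None)).+1 != f i.
  by move=> i; rewrite /f eqSS; exact: prop_adj hc (adj_hub b i).
have hlt : forall i, 0 < f i <= 4 by move=> i; rewrite /f ltn_ord.
have -> : \sum_(i < n) (nat_of_ord (c (Some (b, i)))).+1 = \sum_(i < n) f i by [].
move: (nat_of_ord (c None)) hh => h hh.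
split=> eh.
- have hv : forall i, f i = 2 \/ f i = 3 \/ f i = 4.
    by move=> i; have := hh i; have := hlt i; lia.
  have := @cyc_bound_odd n f 2 3 4 on isT isT hv hadj; lia.
- have hv : forall i, f i = 1 \/ f i = 3 \/ f i = 4.
    by move=> i; have := hh i; have := hlt i; lia.
  have := @cyc_bound_odd n f 1 3 4 on isT isT hv hadj; lia.
- have hv : forall i, f i = 1 \/ f i = 2 \/ f i = 4.
    by move=> i; have := hh i; have := hlt i; lia.
  have := @cyc_bound_odd n f 1 2 4 on isT isT hv hadj; lia.
- have hv : forall i, f i = 1 \/ f i = 2 \/ f i = 3.
    by move=> i; have := hh i; have := hlt i; lia.
  have := @cyc_bound n f 1 2 3 isT isT hv hadj.
  move: (\sum_(i < n) nat_of_bool _) => C; lia.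
Qed.

Lemma chi_eq (T : finType) (e : rel T) k : chromatic_number e = k ->
  chi_plus e = \max_(c : {ffun T -> 'I_k} | properb e c) \sum_v (nat_of_ord (c v)).+1.
Proof. by move=> <-. Qed.

Definition col_even {n} (v : dw_vertex n) : nat :=
  match v with None => 0 | Some (_, i) => if odd i then 1 else 2 end.
Definition col_odd {n} (v : dw_vertex n) : nat :=
  match v with None => 0 | Some (_, i) => if (i : nat) == n.-1 then 1 else if odd i then 2 else 3 end.

Lemma col_even_proper n : ~~ odd n -> 3 <= n ->
  properb (@dw_adj n) [ffun v => (inord (@col_even n v) : 'I_3)].
Proof.
move=> en hn; apply: witness.
- by case=> [[b i]|] //=; case: (odd i).
- by move=> b i /=; case: (odd i).
- move=> b i j hj /=.
  have := ltn_ord i => hi.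
  have [lt|eq] : i.+1 < n \/ i.+1 = n by lia.
  + rewrite modn_small // in hj; rewrite hj /=; by case: (odd i).
  + rewrite eq modnn in hj; rewrite hj /=.
    have e2 : odd i.+1 = odd n by rewrite eq.
    have : odd i by move: en; rewrite -e2 /=; case: (odd i).
    by move=> ->.
Qed.

Lemma col_odd_proper n : odd n -> 3 <= n ->
  properb (@dw_adj n) [ffun v => (inord (@col_odd n v) : 'I_4)].
Proof.
move=> on hn; apply: witness.
- by case=> [[b i]|] //=; case: ifP => //; case: ifP.
- by move=> b i /=; case: ifP => //; case: ifP.
- move=> b i j hj /=.
  have := ltn_ord i => hi.
  have [lt|eq] : i.+1 < n \/ i.+1 = n by lia.
  + rewrite modn_small // in hj; rewrite hj /=.
    have -> : ((i : nat) == n.-1) = false by apply/eqP; lia.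
    by case: (i.+1 == n.-1); case: (odd i).
  + rewrite eq modnn in hj; rewrite hj /=.
    have -> : ((i : nat) == n.-1) = true by apply/eqP; lia.
    have -> : (0 == n.-1) = false by apply/eqP; lia.
    by [].
Qed.

Lemma sum_even_col m : \sum_(i < m.*2) (if odd i then 1 else 2).+1 = 5 * m.
Proof.
rewrite -(big_mkord xpredT (fun i => (if odd i then 1 else 2).+1)).
rewrite (eq_big_nat _ _ (F2 := fun i => if odd i then 2 else 3)); last by move=> i _; case: (odd i).
by rewrite sum_alt mulnC.
Qed.

Lemma sum_odd_col m : \sum_(i < m.*2.+1) (if (i : nat) == (m.*2.+1).-1 then 1 else if odd i then 2 else 3).+1 = 7 * m + 2.
Proof.
rewrite -(big_mkord xpredT (fun i => (if i == (m.*2.+1).-1 then 1 else if odd i then 2 else 3).+1)).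
rewrite big_nat_recr //= eqxx.
rewrite (eq_big_nat _ _ (F2 := fun i => if odd i then 3 else 4)).
  by rewrite sum_alt; lia.
move=> i /andP [_ hi]; have -> : (i == m.*2) = false by apply/eqP; lia.
by case: (odd i).
Qed.

Theorem proposition2p2 (n : nat) (hn : 3 <= n) :
  chi_plus (@dw_adj n) = if odd n then 7 * n - 2 else 5 * n + 1.
Proof.
have em : n = odd n + n./2.*2 by rewrite odd_double_half.
case: (boolP (odd n)) => on.
- have hK : chromatic_number (@dw_adj n) = 4.
    apply: cn_eq => //.
      by exists [ffun v => (inord (@col_odd n v) : 'I_4)]; exact: col_odd_proper.
    by move=> k c hc; exact: low4 on hc.
  rewrite (@chi_eq _ _ _ hK).
  rewrite on in em.
  apply/eqP; rewrite eqn_leq; apply/andP; split.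
  + apply/bigmax_leqP => c hc; rewrite sum_dw'.
    have [o1 o2 o3 o4] := @cyc_odd n c true on hc; have [p1 p2 p3 p4] := @cyc_odd n c false on hc.
    have := ltn_ord (c None).
    move: (\sum_(i < n) _) (\sum_(i < n) _) o1 o2 o3 o4 p1 p2 p3 p4 => S1 S2 o1 o2 o3 o4 p1 p2 p3 p4.
    move: (nat_of_ord (c None)) o1 o2 o3 o4 p1 p2 p3 p4 => h o1 o2 o3 o4 p1 p2 p3 p4 hlt.
    move: em; move: (n./2) => m em.
    have : h = 0 \/ h = 1 \/ h = 2 \/ h = 3 by lia.
    case=> [e|[e|[e|e]]].
    * have := o1 e; have := p1 e; lia.
    * have := o2 e; have := p2 e; lia.
    * have := o3 e; have := p3 e; lia.
    * have := o4 e; have := p4 e; lia.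
  + have := @leq_bigmax_cond _ (fun c : {ffun dw_vertex n -> 'I_4} => properb (@dw_adj n) c)
      (fun c : {ffun dw_vertex n -> 'I_4} => \sum_v (nat_of_ord (c v)).+1) _ (@col_odd_proper n on hn).
    apply: leq_trans.
    rewrite (eq_bigr (fun v => (@col_odd n v).+1)); last first.
      move=> v _; rewrite ffunE inordK //.
      by case: v => [[b i]|] //=; case: ifP => //; case: ifP.
    rewrite sum_dw' /=.
    move: hn on; rewrite em; move: (n./2) => m hn on /=.
    rewrite sum_odd_col; lia.
- have hK : chromatic_number (@dw_adj n) = 3.
    apply: cn_eq => //.
      by exists [ffun v => (inord (@col_even n v) : 'I_3)]; exact: col_even_proper.
    by move=> k c hc; exact: low3 hn hc.
  rewrite (@chi_eq _ _ _ hK).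
  rewrite (negbTE on) in em.
  apply/eqP; rewrite eqn_leq; apply/andP; split.
  + apply/bigmax_leqP => c hc; rewrite sum_dw'.
    have [o1 o2 o3] := @cyc_even n c true hc; have [p1 p2 p3] := @cyc_even n c false hc.
    have := ltn_ord (c None).
    move: (\sum_(i < n) _) (\sum_(i < n) _) o1 o2 o3 p1 p2 p3 => S1 S2 o1 o2 o3 p1 p2 p3.
    move: (nat_of_ord (c None)) o1 o2 o3 p1 p2 p3 => h o1 o2 o3 p1 p2 p3 hlt.
    have : h = 0 \/ h = 1 \/ h = 2 by lia.
    case=> [e|[e|e]].
    * have := o1 e; have := p1 e; lia.
    * have := o2 e; have := p2 e; lia.
    * have := o3 e; have := p3 e; lia.
  + have := @leq_bigmax_cond _ (fun c : {ffun dw_vertex n -> 'I_3} => properb (@dw_adj n) c)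
      (fun c : {ffun dw_vertex n -> 'I_3} => \sum_v (nat_of_ord (c v)).+1) _ (@col_even_proper n on hn).
    apply: leq_trans.
    rewrite (eq_bigr (fun v => (@col_even n v).+1)); last first.
      move=> v _; rewrite ffunE inordK //.
      by case: v => [[b i]|] //=; case: ifP.
    rewrite sum_dw' /=.
    move: hn on; rewrite em; move: (n./2) => m hn on /=.
    rewrite sum_even_col; lia.
Qed.
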